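(* Let $G$ be an ordered abelian group, $\beta_0,\beta_1,\beta_{0,1}\in G$, and for $e=0,1$ let $(\gamma_{e,j})_{j<\lambda_e}$ ($\lambda_e$ a limit ordinal) be a well-ordered, monotone increasing family of elements $\ge0$ of $G$ without last element. Put $P_{0,j_0}=\beta_0+\gamma_{0,j_0}$, $P_{1,j_1}=\beta_1+\gamma_{1,j_1}$ and $P_{0,1,j_0,j_1}=\beta_{0,1}+\gamma_{0,j_0}+\gamma_{1,j_1}$. Then there exist ordinals $\rho_0<\lambda_0$, $\rho_1<\lambda_1$, a subset $A\subset[1,\lambda_0)$ and a map $\sigma:A\to[1,\lambda_1)$ such that $P_{0,j_0}$, $P_{1,j_1}$, $P_{0,1,j_0,j_1}$ are pairwise different for all $\rho_0<j_0<\lambda_0$, $\rho_1<j_1<\lambda_1$ with $j_1\neq\sigma(j_0)$ whenever $j_0\in A$. In particular, for all ordinals $\nu_0<\lambda_0$, $\nu_1<\lambda_1$ there exist $\nu_0<j_0<\lambda_0$, $\nu_1<j_1<\lambda_1$ such that $P_{0,j_0}$, $P_{1,j_1}$, $P_{0,1,j_0,j_1}$ are pairwise different. *)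

(* Defs.v *)
From HB Require Import structures.
From mathcomp Require Import all_boot all_order all_algebra.
Set Implicit Arguments. Unset Strict Implicit. Unset Printing Implicit Defensive.
Import Order.TTheory GRing.Theory Num.Theory.

Definition ordered_abelian_group (G : porderZmodType) : Prop :=
  (forall x y : G, ((x <= y) || (y <= x))%R) /\
  (forall x y z : G, (x <= y)%R -> (x + z <= y + z)%R).

(* The index set [0, lambda) of a limit ordinal lambda, represented (up to
   order isomorphism) by a totally ordered type I which is well-ordered,
   nonempty and has no last element. *)
Definition limit_ordinal_type (d : Order.disp_t) (I : orderType d) : Prop :=
  well_founded (fun x y : I => (x < y)%O) /\
  inhabited I /\
  (forall j : I, exists k : I, (j < k)%O).

(* j lies in [1, lambda), i.e. j is not the least element 0. *)
Definition pos_index (d : Order.disp_t) (I : orderType d) (j : I) : Prop :=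
  exists i : I, (i < j)%O.

Definition pairwise_distinct3 (G : Type) (x y z : G) : Prop :=
  x <> y /\ x <> z /\ y <> z.

(* Main.v *)
Require Import Defs.
From HB Require Import structures.
From mathcomp Require Import all_boot all_order all_algebra.
Import Order.TTheory GRing.Theory Num.Theory.
From Stdlib Require Import ClassicalEpsilon.

Theorem lemma1p3
  (G : porderZmodType) (HG : ordered_abelian_group G)
  (beta0 beta1 beta01 : G)
  (d0 : Order.disp_t) (I0 : orderType d0) (HI0 : limit_ordinal_type I0)
  (d1 : Order.disp_t) (I1 : orderType d1) (HI1 : limit_ordinal_type I1)
  (gamma0 : I0 -> G) (gamma1 : I1 -> G)
  (Hg0pos : forall j : I0, (0 <= gamma0 j)%R)
  (Hg1pos : forall j : I1, (0 <= gamma1 j)%R)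
  (Hg0inc : forall j k : I0, (j < k)%O -> (gamma0 j < gamma0 k)%R)
  (Hg1inc : forall j k : I1, (j < k)%O -> (gamma1 j < gamma1 k)%R) :
  let P0 := fun j0 : I0 => (beta0 + gamma0 j0)%R in
  let P1 := fun j1 : I1 => (beta1 + gamma1 j1)%R in
  let P01 := fun (j0 : I0) (j1 : I1) => (beta01 + gamma0 j0 + gamma1 j1)%R in
  (exists (rho0 : I0) (rho1 : I1) (A : I0 -> Prop) (sigma : I0 -> I1),
      (forall j0, A j0 -> pos_index j0) /\
      (forall j0, A j0 -> pos_index (sigma j0)) /\
      (forall (j0 : I0) (j1 : I1), (rho0 < j0)%O -> (rho1 < j1)%O ->
         (A j0 -> j1 <> sigma j0) ->
         pairwise_distinct3 (P0 j0) (P1 j1) (P01 j0 j1)))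
  /\
  (forall (nu0 : I0) (nu1 : I1), exists (j0 : I0) (j1 : I1),
      (nu0 < j0)%O /\ (nu1 < j1)%O /\
      pairwise_distinct3 (P0 j0) (P1 j1) (P01 j0 j1)).
Proof.
move=> P0 P1 P01.
have [i0] := HI0.2.1. have [i1] := HI1.2.1.
pose rho0 := epsilon (inhabits i0) (fun j => beta1 = (beta01 + gamma0 j)%R).
pose rho1 := epsilon (inhabits i1) (fun j => beta0 = (beta01 + gamma1 j)%R).
have K0 : forall j0, (rho0 < j0)%O -> beta1 <> (beta01 + gamma0 j0)%R.
  move=> j0 lt E.
  have E' := epsilon_spec (inhabits i0) (fun j => beta1 = (beta01 + gamma0 j)%R) (ex_intro _ j0 E).
  have H : gamma0 rho0 = gamma0 j0 by apply: (addrI beta01); rewrite -E -E'.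
  by move: (Hg0inc _ _ lt); rewrite H ltxx.
have K1 : forall j1, (rho1 < j1)%O -> beta0 <> (beta01 + gamma1 j1)%R.
  move=> j1 lt E.
  have E' := epsilon_spec (inhabits i1) (fun j => beta0 = (beta01 + gamma1 j)%R) (ex_intro _ j1 E).
  have H : gamma1 rho1 = gamma1 j1 by apply: (addrI beta01); rewrite -E -E'.
  by move: (Hg1inc _ _ lt); rewrite H ltxx.
have inj1 : forall a b, P1 a = P1 b -> a = b.
  move=> a b E; have H : gamma1 a = gamma1 b by apply: (addrI beta1).
  case: (ltgtP a b) => // h.
    by move: (Hg1inc _ _ h); rewrite H ltxx.
  by move: (Hg1inc _ _ h); rewrite H ltxx.
have key : forall j0 j1, (rho0 < j0)%O -> (rho1 < j1)%O -> P0 j0 <> P1 j1 ->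
    pairwise_distinct3 (P0 j0) (P1 j1) (P01 j0 j1).
  move=> j0 j1 h0 h1 E; split; first done; split.
    move=> E'; apply: (K1 _ h1); rewrite /P0 /P01 addrAC in E'.
    exact: (addIr (gamma0 j0)).
  move=> E'; apply: (K0 _ h0); rewrite /P1 /P01 in E'.
  exact: (addIr (gamma1 j1)).
pose sigma := fun j0 => epsilon (inhabits i1) (fun j1 => (rho1 < j1)%O /\ P0 j0 = P1 j1).
split.
  exists rho0, rho1, (fun j0 => (rho0 < j0)%O /\ (rho1 < sigma j0)%O /\ P0 j0 = P1 (sigma j0)), sigma.
  split; first by move=> j0 [h _]; exists rho0.
  split; first by move=> j0 [_ [h _]]; exists rho1.
  move=> j0 j1 h0 h1 HA; apply: key => // E.
  have [s1 s2] := epsilon_spec (inhabits i1) (fun j1 => (rho1 < j1)%O /\ P0 j0 = P1 j1) (ex_intro _ j1 (conj h1 E)).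
  apply: (HA (conj h0 (conj s1 s2))).
  apply: inj1; rewrite -E; exact: s2.
move=> nu0 nu1.
have [j0 hj0] := HI0.2.2 (Order.max nu0 rho0).
have [k hk] := HI1.2.2 (Order.max nu1 rho1).
have [k' hk'] := HI1.2.2 k.
move: hj0 hk; rewrite !gt_max => /andP [a0 b0] /andP [a1 b1].
case: (eqVneq (P0 j0) (P1 k)) => E.
  exists j0, k'; split => //; split; first exact: lt_trans hk'.
  apply: key => //; first exact: lt_trans hk'.
  move=> E'; have h := inj1 _ _ (etrans (esym E) E').
  by move: hk'; rewrite h ltxx.
exists j0, k; split => //; split => //.
by apply: key => //; apply/eqP.
Qed.
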